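(* Let $k\ge 1$, $n_1,\dots,n_k\in\mathbb{N}$ and $m\in\mathbb{N}$ with $m\ge 2$. For each $j=1,\dots,k$ let $I_j:\ell_2^{n_j,\mathbb{R}}\to\ell_\infty^{N_j,\mathbb{R}}$ be an injective linear operator with $\|I_j\|\le 1$ and $\|I_j^{-1}\|\le\frac{m}{m-1}$, and put $c^j_{i}=I_j(e_{i})\in\mathbb{R}^{N_j}$ for $1\le i\le n_j$, with coordinates $c^j_i(s)$, $1\le s\le N_j$. Let $\rho=(\rho_{i_1,\dots,i_k})\in \mathbb{R}^{n_1}\otimes\cdots\otimes\mathbb{R}^{n_k}$, and let $V$ be the optimal value of the linear programming problem in the real variables $\lambda_{i_1,\dots,i_k}$ ($1\le i_j\le n_j$): maximize $\sum_{i_1,\dots,i_k=1}^{n_1,\dots,n_k}\rho_{i_1,\dots,i_k}\lambda_{i_1,\dots,i_k}$ subject to $$-1\le \sum_{i_1,\dots,i_k=1}^{n_1,\dots,n_k}\lambda_{i_1,\dots,i_k}\,c^1_{i_1}(s_1)\cdots c^k_{i_k}(s_k)\le 1\quad\text{for all } 1\le s_j\le N_j,\ 1\le j\le k.$$ Then $\pi(\rho)\le V\le \left(\frac{m}{m-1}\right)^k\pi(\rho)$, where $\pi(\rho)$ is the norm of $\rho$ in $\bigotimes_{j=1,\pi}^k\ell_2^{n_j,\mathbb{R}}$; that is, $V$ equals $\pi(\rho)$ up to a relative error bounded by $\left(\frac{m}{m-1}\right)^k-1$.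
   Context: $\ell_2^{n,\mathbb{R}}$ is $\mathbb{R}^n$ with the Euclidean norm, $\ell_\infty^{N,\mathbb{R}}$ is $\mathbb{R}^N$ with the sup-norm, and $e_1,e_2,\dots$ is the canonical basis. For injective $I$, $\|I^{-1}\|$ is the norm of the inverse defined on the range of $I$. Elements of $\mathbb{R}^{n_1}\otimes\cdots\otimes\mathbb{R}^{n_k}$ are identified with coefficient arrays $(\rho_{i_1,\dots,i_k})$ with respect to $e_{i_1}\otimes\cdots\otimes e_{i_k}$. The projective norm on $\bigotimes_{j=1}^k X_j$ (normed spaces $X_j$) is $\pi(u)=\inf\{\sum_{i=1}^r\|u^1_i\|\cdots\|u^k_i\| : u=\sum_{i=1}^r u^1_i\otimes\cdots\otimes u^k_i\}$, and $\bigotimes_{j=1,\pi}^k X_j$ denotes the tensor product with this norm. *)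

(* Defs.v *)
From HB Require Import structures.
From mathcomp Require Import all_boot all_order all_algebra.
From mathcomp Require Import classical_sets reals.
Set Implicit Arguments. Unset Strict Implicit. Unset Printing Implicit Defensive.
Import Order.TTheory GRing.Theory Num.Theory.
Local Open Scope ring_scope.
Local Open Scope classical_set_scope.

(* Multi-indices (i_1,...,i_k) with 1 <= i_j <= n_j (0-based here). *)
Definition multi_index (k : nat) (n : 'I_k -> nat) : finType :=
  {dffun forall j : 'I_k, 'I_(n j)}.

Definition norm2 {R : realType} {n : nat} (x : 'I_n -> R) : R :=
  Num.sqrt (\sum_(i < n) x i ^+ 2).

Definition normInf {R : realType} {N : nat} (y : 'I_N -> R) : R :=
  \big[Num.max/0]_(s < N) `|y s|.

(* The linear operator R^n -> R^N given by the vectors c_i = I(e_i). *)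
Definition apply_op {R : realType} {n N : nat} (c : 'I_n -> 'I_N -> R)
  (x : 'I_n -> R) : 'I_N -> R := fun s => \sum_(i < n) x i * c i s.

Definition proj_norm {R : realType} (k : nat) (n : 'I_k -> nat)
  (rho : multi_index n -> R) : R :=
  inf [set t : R | exists (r : nat) (u : 'I_r -> forall j : 'I_k, 'I_(n j) -> R),
         (forall idx : multi_index n,
             rho idx = \sum_(i < r) \prod_(j < k) u i j (idx j)) /\
         t = \sum_(i < r) \prod_(j < k) norm2 (u i j)].

Definition lp_feasible {R : realType} (k : nat) (n N : 'I_k -> nat)
  (c : forall j : 'I_k, 'I_(n j) -> 'I_(N j) -> R)
  (lam : multi_index n -> R) : Prop :=
  forall s : multi_index N,
    -1 <= \sum_(idx : multi_index n) lam idx * \prod_(j < k) c j (idx j) (s j) <= 1.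

Definition lp_value {R : realType} (k : nat) (n N : 'I_k -> nat)
  (c : forall j : 'I_k, 'I_(n j) -> 'I_(N j) -> R)
  (rho : multi_index n -> R) : R :=
  sup [set v : R | exists lam : multi_index n -> R,
         lp_feasible c lam /\ v = \sum_(idx : multi_index n) rho idx * lam idx].

(* Main.v *)
Require Import Defs.
From HB Require Import structures.
From mathcomp Require Import all_boot all_order all_algebra.
From mathcomp Require Import classical_sets reals.
From mathcomp Require Import ring lra.
Import Order.TTheory GRing.Theory Num.Theory.
Local Open Scope ring_scope.

Lemma norm2_ge0 (R : realType) n (a : 'I_n -> R) : 0 <= norm2 a.
Proof. exact: sqrtr_ge0. Qed.

Lemma cs {R : realType} {n} (a b : 'I_n -> R) :
  `|\sum_i a i * b i| <= norm2 a * norm2 b.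
Proof.
set A := \sum_i a i ^+ 2; set B := \sum_i b i ^+ 2; set S := \sum_i a i * b i.
have A0 : 0 <= A by apply: sumr_ge0 => i _; exact: sqr_ge0.
have B0 : 0 <= B by apply: sumr_ge0 => i _; exact: sqr_ge0.
have key : S ^+ 2 <= A * B.
  have [Az|Ap] := eqVneq A 0.
    have az : forall i, a i = 0.
      move=> i; apply/eqP; rewrite -sqrf_eq0; apply/eqP.
      by move/eqP: Az; rewrite psumr_eq0 => [/allP/(_ i (mem_index_enum _))/implyP/(_ isT)/eqP|j _]; [|exact: sqr_ge0].
    have -> : S = 0 by rewrite /S big1 // => i _; rewrite az mul0r.
    by rewrite expr0n /= mulr_ge0.
  have Apos : 0 < A by rewrite lt_def Ap A0.
  have E : \sum_i (A * b i - S * a i) ^+ 2 = A * (A * B - S ^+ 2).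
    transitivity (\sum_i (A ^+ 2 * b i ^+ 2 - (2 * A * S) * (a i * b i) + S ^+ 2 * a i ^+ 2)).
      by apply: eq_bigr => i _; ring.
    rewrite big_split /= sumrB -!mulr_sumr -/A -/B -/S; ring.
  have : 0 <= A * (A * B - S ^+ 2).
    by rewrite -E; apply: sumr_ge0 => i _; exact: sqr_ge0.
  by rewrite pmulr_rge0 // subr_ge0.
rewrite /norm2 -/A -/B -sqrtrM // -sqrtr_sqr ler_sqrt //; exact: mulr_ge0.
Qed.

Section P1.
Variables (R : realType) (k : nat) (n N : 'I_k -> nat).
Variable (c : forall j : 'I_k, 'I_(n j) -> 'I_(N j) -> R).

Definition pad {m : nat} (f : 'I_m -> R) : nat -> R := fun t => oapp f 0 (insub t).
Lemma padE m (f : 'I_m -> R) (i : 'I_m) : pad f i = f i.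
Proof. by rewrite /pad valK. Qed.

Definition ev (lam : multi_index n -> R) (X : 'I_k -> nat -> R) : R :=
  \sum_(idx : multi_index n) lam idx * \prod_(j < k) X j (idx j).
Definition upd (X : 'I_k -> nat -> R) j0 (a : nat -> R) : 'I_k -> nat -> R :=
  fun j => if j == j0 then a else X j.
Definition nrm j (a : nat -> R) := norm2 (fun i : 'I_(n j) => a i).
Definition eb (t0 : nat) : nat -> R := fun t => (t == t0)%:R.

Lemma ev_ext lam X Y : (forall j t, X j t = Y j t) -> ev lam X = ev lam Y.
Proof.
move=> h; apply: eq_bigr => idx _; congr (_ * _); apply: eq_bigr => j _; exact: h.
Qed.

Lemma prod_upd X j0 a (idx : multi_index n) :
  \prod_(j < k) upd X j0 a j (idx j) = a (idx j0) * \prod_(j < k | j != j0) X j (idx j).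
Proof.
rewrite (bigD1 j0) //= /upd eqxx; congr (_ * _); apply: eq_bigr => j /negbTE -> //.
Qed.

Lemma ev_upd lam X j0 a :
  ev lam (upd X j0 a) = \sum_(i < n j0) a i * ev lam (upd X j0 (eb i)).
Proof.
rewrite /ev; under eq_bigr do rewrite prod_upd.
under [RHS]eq_bigr => i _ do (under eq_bigr do rewrite prod_upd; rewrite mulr_sumr).
rewrite exchange_big /=; apply: eq_bigr => idx _.
rewrite (bigD1 (idx j0)) //= /eb eqxx [X in _ + X]big1 ?addr0 => [|i ne]; first by rewrite mulr1n; ring.
have -> : (nat_of_ord (idx j0) == nat_of_ord i) = false by apply/negbTE; rewrite eq_sym.
by rewrite mulr0n mul0r !mulr0.
Qed.


Lemma eqW' (x y : R) : x = y -> x <= y. Proof. by move->. Qed.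

Section Bound.
Variables (lam : multi_index n -> R) (M : R).
Hypothesis M0 : 0 <= M.
Hypothesis Hf : lp_feasible c lam.
Hypothesis H3 : forall (j : 'I_k) (x : 'I_(n j) -> R),
  norm2 x <= M * normInf (apply_op (c j) x).

Lemma bound p : (p <= k)%N -> forall X : 'I_k -> nat -> R,
  (forall j : 'I_k, (p <= j)%N -> exists s : 'I_(N j), forall i : 'I_(n j), X j i = c j i s) ->
  `|ev lam X| <= M ^+ p * \prod_(j < k | (j < p)%N) nrm j (X j).
Proof.
elim: p => [|p IH] hp X HX.
  have [s Hs] := fin_all_exists (fun j : 'I_k => HX j (leq0n j)).
  have := Hf [ffun j => s j]; rewrite -ler_norml => h.
  rewrite expr0 mul1r big_pred0 // (le_trans _ h) //; apply: eqW'; congr `|_|.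
  apply: eq_bigr => idx _; congr (_ * _); apply: eq_bigr => j _; by rewrite ffunE Hs.
set j0 : 'I_k := Ordinal hp.
set v : 'I_(n j0) -> R := fun i => ev lam (upd X j0 (eb i)).
have EX : ev lam X = \sum_(i < n j0) X j0 i * v i.
  rewrite -ev_upd; apply: ev_ext => j t; rewrite /upd; case: eqP => [->|//] //.
have Hnrm0 : forall jj (aa : nat -> R), 0 <= nrm jj aa.
  by move=> jj aa; exact: sqrtr_ge0.
set P := \prod_(j < k | (j < p)%N) nrm j (X j).
have P0 : 0 <= P by apply: prodr_ge0 => jj _; exact: Hnrm0.
have Hv : normInf (apply_op (c j0) v) <= M ^+ p * P.
  rewrite /normInf; apply: bigmax_le => [|s _]; first by rewrite mulr_ge0 ?exprn_ge0.
  set a : nat -> R := pad (fun i => c j0 i s).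
  have -> : apply_op (c j0) v s = ev lam (upd X j0 a).
    rewrite ev_upd /apply_op; apply: eq_bigr => i _; by rewrite /a padE mulrC.
  apply: le_trans (IH (ltnW hp) _ _) _; last first.
    rewrite /P; apply: eqW'; congr (_ * _); apply: eq_bigr => j jp; rewrite /upd.
    by case: eqP => // ej; move: jp; rewrite ej /= ltnn.
  move=> j pj; rewrite /upd; case: eqP => [->|nj].
    by exists s => i; rewrite /a padE.
  apply: HX; rewrite ltn_neqAle pj andbT; apply/eqP => e; apply: nj; exact: val_inj.
have -> : \prod_(j < k | (j < p.+1)%N) nrm j (X j) = nrm j0 (X j0) * P.
  rewrite (bigD1 j0) /= ?ltnSn //; congr (_ * _); apply: eq_bigl => j.
  by rewrite -val_eqE /= ltnS; case: ltngtP.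
rewrite EX; have h := cs (fun i : 'I_(n j0) => X j0 i) v.
apply: le_trans h _.
have hv : norm2 v <= M * (M ^+ p * P) := le_trans (H3 j0 v) (ler_wpM2l M0 Hv).
have -> : M ^+ p.+1 * (nrm j0 (X j0) * P) = nrm j0 (X j0) * (M * (M ^+ p * P)).
  by rewrite exprS; ring.
rewrite /nrm; apply: ler_wpM2l; [exact: (Hnrm0 j0 (X j0)) | exact: hv].
Qed.

Lemma rep_bound r (u : 'I_r -> forall j : 'I_k, 'I_(n j) -> R) (rho : multi_index n -> R) :
  (forall idx, rho idx = \sum_(i < r) \prod_(j < k) u i j (idx j)) ->
  \sum_idx rho idx * lam idx <= M ^+ k * \sum_(i < r) \prod_(j < k) norm2 (u i j).
Proof.
move=> Hr.
have E : \sum_idx rho idx * lam idx = \sum_(i < r) ev lam (fun j => pad (u i j)).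
  under eq_bigr do rewrite Hr mulr_suml.
  rewrite exchange_big /=; apply: eq_bigr => i _; apply: eq_bigr => idx _.
  rewrite mulrC; congr (_ * _); apply: eq_bigr => j _; by rewrite padE.
rewrite E mulr_sumr; apply: ler_sum => i _.
apply: le_trans (ler_norm _) _.
have hb := @bound k (leqnn k) (fun j => pad (u i j)).
apply: le_trans (hb _) _.
  by move=> j kj; exfalso; move: kj; rewrite leqNgt ltn_ord.
apply: eqW'; congr (_ * _); apply: eq_big => [j|j _]; first exact: ltn_ord.
rewrite /nrm /norm2; congr Num.sqrt; apply: eq_bigr => i0 _; by rewrite padE.
Qed.
End Bound.

End P1.

Section HBsec.
Local Open Scope classical_set_scope.
Variables (R : realType) (V : lmodType R) (I : finType) (p : V -> R) (rho : V) (e : I -> V).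
Hypotheses (pD : forall x y, p (x + y) <= p x + p y)
  (pZ : forall t x, p (t *: x) <= `|t| * p x) (p0 : forall x, 0 <= p x).

Lemma pZpos t x : 0 < t -> p (t *: x) = t * p x.
Proof.
move=> t0; apply/eqP; rewrite eq_le; apply/andP; split.
  by have := pZ t x; rewrite gtr0_norm.
have := pZ t^-1 (t *: x); rewrite scalerA mulVf ?gt_eqF // scale1r gtr0_norm ?invr_gt0 // => h.
by rewrite -(ler_pM2l t0) mulrA mulfV ?gt_eqF // mul1r in h.
Qed.

Definition Fs (s : seq I) (w : I -> R) (cc : R) (a : I -> R) : R :=
  cc * p rho + \sum_(i <- s) a i * w i.
Definition Ls (s : seq I) (cc : R) (a : I -> R) : V :=
  cc *: rho + \sum_(i <- s) a i *: e i.
Definition domd s w := forall cc a, Fs s w cc a <= p (Ls s cc a).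

Lemma FsD s w c1 c2 a1 a2 :
  Fs s w (c1 + c2) (fun i => a1 i + a2 i) = Fs s w c1 a1 + Fs s w c2 a2.
Proof.
rewrite /Fs; under eq_bigr do rewrite mulrDl; rewrite big_split /=; ring.
Qed.
Lemma LsD s c1 c2 a1 a2 :
  Ls s (c1 + c2) (fun i => a1 i + a2 i) = Ls s c1 a1 + Ls s c2 a2.
Proof.
rewrite /Ls; under eq_bigr do rewrite scalerDl; rewrite big_split /= scalerDl.
by rewrite addrACA.
Qed.
Lemma FsZ s w t cc a : Fs s w (t * cc) (fun i => t * a i) = t * Fs s w cc a.
Proof.
by rewrite /Fs mulrDr mulrA; congr (_ + _); rewrite mulr_sumr; apply: eq_bigr => i _; rewrite mulrA.
Qed.
Lemma LsZ s t cc a : Ls s (t * cc) (fun i => t * a i) = t *: Ls s cc a.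
Proof.
by rewrite /Ls scalerDr scalerA; congr (_ + _); rewrite scaler_sumr; apply: eq_bigr => i _; rewrite scalerA.
Qed.

Lemma dom_nil w : domd [::] w.
Proof.
move=> cc a; rewrite /Fs /Ls !big_nil addr0 addr0.
case: (ltrP 0 cc) => hc; first by rewrite pZpos.
apply: le_trans (p0 _); exact: mulr_le0_ge0.
Qed.

Lemma dom_cons s w i0 : i0 \notin s -> domd s w ->
  exists al, domd (i0 :: s) (fun i => if i == i0 then al else w i).
Proof.
move=> ni hw; set y := e i0.
set S := [set z | exists cc a, z = Fs s w cc a - p (Ls s cc a - y)].
have key : forall cc a cc' a', Fs s w cc a - p (Ls s cc a - y) <= p (Ls s cc' a' + y) - Fs s w cc' a'.
  move=> cc a cc' a'.
  have h1 := hw (cc + cc') (fun i => a i + a' i); rewrite FsD LsD in h1.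
  have h2 := pD (Ls s cc a - y) (Ls s cc' a' + y).
  rewrite addrACA addNr addr0 in h2; lra.
have Sne : S !=set0 by exists (Fs s w 0 (fun=> 0) - p (Ls s 0 (fun=> 0) - y)); exists 0, (fun=> 0).
have Sub : has_ubound S.
  exists (p (Ls s 0 (fun=> 0) + y) - Fs s w 0 (fun=> 0)) => z [cc [a ->]]; exact: key.
set al := sup S.
have Hup : forall cc a, al <= p (Ls s cc a + y) - Fs s w cc a.
  move=> cc a; apply: ge_sup => // z [cc' [a' ->]]; exact: key.
have Hlo : forall cc a, Fs s w cc a - p (Ls s cc a - y) <= al.
  move=> cc a; apply: ub_le_sup => //; by exists cc, a.
exists al => cc a.
have EF : Fs (i0 :: s) (fun i => if i == i0 then al else w i) cc a = Fs s w cc a + a i0 * al.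
  rewrite /Fs big_cons eqxx -addrA; congr (_ + _).
  rewrite addrC; congr (_ + _); apply: eq_big_seq => i iis.
  by case: eqP => // ei; move: ni; rewrite -ei iis.
have EL : Ls (i0 :: s) cc a = Ls s cc a + a i0 *: y.
  by rewrite /Ls big_cons /y [a i0 *: _ + _]addrC addrA.
rewrite EF EL; set b := a i0.
case: (ltgtP b 0) => hb; last first.
- by rewrite hb mul0r scale0r !addr0; exact: hw.
-
  have h := Hup (b^-1 * cc) (fun i => b^-1 * a i).
  rewrite FsZ LsZ in h.
  have -> : Ls s cc a + b *: y = b *: (b^-1 *: Ls s cc a + y).
    by rewrite scalerDr scalerA mulfV ?gt_eqF // scale1r.
  rewrite pZpos //.
  have := ler_wpM2l (ltW hb) h; rewrite mulrBr mulrA mulfV ?gt_eqF // mul1r => h'.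
  lra.
-
  set t := - b.
  have ht : 0 < t by rewrite /t oppr_gt0.
  have h := Hlo (t^-1 * cc) (fun i => t^-1 * a i).
  rewrite FsZ LsZ in h.
  have E2 : Ls s cc a + b *: y = t *: (t^-1 *: Ls s cc a - y).
    by rewrite scalerBr scalerA mulfV ?gt_eqF // scale1r /t scaleNr opprK.
  rewrite E2 pZpos //.
  have := ler_wpM2l (ltW ht) h; rewrite mulrBr mulrA mulfV ?gt_eqF // mul1r => h'.
  rewrite /t in h' *; nra.
Qed.

Lemma dom_seq s : uniq s -> exists w, domd s w.
Proof.
elim: s => [|i0 s IH] /=; first by exists (fun=> 0); exact: dom_nil.
case/andP => ni us; have [w hw] := IH us; have [al h] := dom_cons _ _ _ ni hw.
by eexists; exact: h.
Qed.

End HBsec.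

Section PiNorm.
Local Open Scope classical_set_scope.
Variables (R : realType) (k : nat) (n : 'I_k -> nat).
Hypothesis hk : (1 <= k)%N.
Let j0 : 'I_k := Ordinal hk.
Local Notation I := (multi_index n).

Definition Tset (x : I -> R) : set R :=
  [set t : R | exists (r : nat) (u : 'I_r -> forall j : 'I_k, 'I_(n j) -> R),
         (forall idx : I, x idx = \sum_(i < r) \prod_(j < k) u i j (idx j)) /\
         t = \sum_(i < r) \prod_(j < k) norm2 (u i j)].

Lemma proj_normE x : proj_norm x = inf (Tset x). Proof. by []. Qed.

Lemma T_ge0 x t : Tset x t -> 0 <= t.
Proof.
case=> r [u [_ ->]]; apply: sumr_ge0 => i _; apply: prodr_ge0 => j _; exact: sqrtr_ge0.
Qed.

Lemma T_lb x : has_lbound (Tset x).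
Proof. by exists 0 => t; exact: T_ge0. Qed.

Lemma pi_le (x : I -> R) t : Tset x t -> proj_norm x <= t.
Proof. by move=> ht; rewrite proj_normE; exact: ge_inf (T_lb x) _ ht. Qed.

Lemma T_ne (x : I -> R) : Tset x !=set0.
Proof.
pose u (i : 'I_#|I|) (j : 'I_k) (t : 'I_(n j)) : R :=
  (if j == j0 then x (enum_val i) else 1) * (t == enum_val i j)%:R.
exists (\sum_(i < #|I|) \prod_(j < k) norm2 (u i j)), #|I|, u; split => // idx.
have E : forall i : 'I_#|I|, \prod_(j < k) u i j (idx j) = x (enum_val i) * (idx == enum_val i)%:R.
  move=> i; rewrite /u big_split /=; congr (_ * _).
    by rewrite (bigD1 j0) //= ?eqxx big1 ?mulr1 // => j /negbTE ->.
  have [->|ne] := eqVneq idx (enum_val i).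
    by rewrite big1 // => j _; rewrite eqxx.
  have [j hj] : exists j, idx j != enum_val i j.
    apply/existsP; apply: contraR ne => /existsPn h; apply/eqP/ffunP => j.
    by apply/eqP; move: (h j); rewrite negbK.
  by rewrite (bigD1 j) //= (negbTE hj) mul0r.
under eq_bigr do rewrite E.
rewrite -(big_enum_val (fun a : I => x a * (idx == a)%:R)) /=.
rewrite (bigD1 idx) //= eqxx mulr1 big1 ?addr0 // => a /negbTE.
by rewrite eq_sym => ->; rewrite mulr0.
Qed.

Lemma pi_ge0 (x : I -> R) : 0 <= proj_norm x.
Proof. by rewrite proj_normE; apply: lb_le_inf (T_ne x) _ => t; exact: T_ge0. Qed.

Lemma pi_add (x y : I -> R) : proj_norm (fun idx => x idx + y idx) <= proj_norm x + proj_norm y.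
Proof.
have key : forall t1 t2, Tset x t1 -> Tset y t2 -> proj_norm (fun idx => x idx + y idx) <= t1 + t2.
  move=> t1 t2 [r1 [u1 [h1 ->]]] [r2 [u2 [h2 ->]]].
  pose u (i : 'I_(r1 + r2)) := match split i with inl a => u1 a | inr b => u2 b end.
  apply: pi_le; exists (r1 + r2), u; split.
    move=> idx; rewrite big_split_ord /= h1 h2 /u; congr (_ + _); apply: eq_bigr => i _.
      by rewrite (unsplitK (inl i)).
    by rewrite (unsplitK (inr i)).
  rewrite big_split_ord /= /u; congr (_ + _); apply: eq_bigr => i _.
    by rewrite (unsplitK (inl i)).
  by rewrite (unsplitK (inr i)).
have h2 : forall t2, Tset y t2 -> proj_norm (fun idx => x idx + y idx) - t2 <= proj_norm x.
  move=> t2 ht2; rewrite proj_normE; apply: lb_le_inf (T_ne x) _ => t1 ht1.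
  have := key _ _ ht1 ht2; lra.
have : proj_norm (fun idx => x idx + y idx) - proj_norm x <= proj_norm y.
  rewrite (proj_normE y); apply: lb_le_inf (T_ne y) _ => t2 ht2.
  have := h2 _ ht2; lra.
lra.
Qed.

Lemma norm2Z m (t : R) (v : 'I_m -> R) : norm2 (fun a => t * v a) = `|t| * norm2 v.
Proof.
rewrite /norm2 (_ : \sum_(i < m) (t * v i) ^+ 2 = t ^+ 2 * \sum_(i < m) v i ^+ 2).
  by rewrite sqrtrM ?sqr_ge0 // sqrtr_sqr.
by rewrite mulr_sumr; apply: eq_bigr => i _; rewrite exprMn.
Qed.

Lemma pi_scale t (x : I -> R) : proj_norm (fun idx => t * x idx) <= `|t| * proj_norm x.
Proof.
have key : forall t', Tset x t' -> proj_norm (fun idx => t * x idx) <= `|t| * t'.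
  move=> t' [r [u [h ->]]].
  pose u' (i : 'I_r) (j : 'I_k) : 'I_(n j) -> R :=
    if j == j0 then (fun a => t * u i j a) else u i j.
  apply: pi_le; exists r, u'; split.
    move=> idx; rewrite h mulr_sumr; apply: eq_bigr => i _.
    rewrite /u' (bigD1 j0) //= ?eqxx [in RHS](bigD1 j0) //= mulrA; congr (_ * _).
    by apply: eq_bigr => j /negbTE ->.
  rewrite mulr_sumr; apply: eq_bigr => i _.
  rewrite /u' (bigD1 j0) //= ?eqxx [in RHS](bigD1 j0) //= norm2Z mulrA; congr (_ * _).
  by apply: eq_bigr => j /negbTE ->.
have [t0|tn0] := eqVneq t 0.
  have [t' ht'] := T_ne x; have := key _ ht'; by rewrite t0 normr0 !mul0r.
have tp : 0 < `|t| by rewrite normr_gt0.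
have : proj_norm (fun idx => t * x idx) / `|t| <= proj_norm x.
  rewrite proj_normE; apply: lb_le_inf (T_ne x) _ => t' ht'.
  by rewrite ler_pdivrMr // mulrC key.
by rewrite ler_pdivrMr // mulrC.
Qed.

Lemma pi_rank1 (v : forall j : 'I_k, 'I_(n j) -> R) :
  proj_norm (fun idx : I => \prod_(j < k) v j (idx j)) <= \prod_(j < k) norm2 (v j).
Proof.
apply: pi_le; exists 1%N, (fun _ => v); split; first by move=> idx; rewrite big_ord1.
by rewrite big_ord1.
Qed.

End PiNorm.


Lemma scaleoE (R : realType) (x y : R) : x *: (y : R^o) = x * y. Proof. by []. Qed.
Lemma trueR (R : realType) : (true%:R : R) = 1. Proof. by []. Qed.
Lemma falseR (R : realType) : (false%:R : R) = 0. Proof. by []. Qed.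

Lemma row_le1 (R : realType) m N' (c : 'I_m -> 'I_N' -> R) (s : 'I_N') :
  (forall x : 'I_m -> R, normInf (apply_op c x) <= norm2 x) ->
  norm2 (fun i => c i s) <= 1.
Proof.
move=> H2; set x := fun i => c i s.
have h := H2 x.
have e : apply_op c x s = norm2 x ^+ 2.
  rewrite /norm2 sqr_sqrtr; last by apply: sumr_ge0 => i _; exact: sqr_ge0.
  by rewrite /apply_op; apply: eq_bigr => i _; rewrite expr2.
have h2 : `|apply_op c x s| <= normInf (apply_op c x).
  exact: (le_bigmax 0 (fun s0 => `|apply_op c x s0|) s).
rewrite e ger0_norm ?sqr_ge0 // in h2.
have a0 := norm2_ge0 _ _ x.
have : norm2 x ^+ 2 <= norm2 x := le_trans h2 h.
rewrite expr2; nra.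
Qed.

Theorem proposition1 (R : realType) (k : nat) (n N : 'I_k -> nat) (m : nat)
  (c : forall j : 'I_k, 'I_(n j) -> 'I_(N j) -> R)
  (rho : multi_index n -> R) :
  (1 <= k)%N -> (2 <= m)%N ->
  (forall j : 'I_k, injective (apply_op (c j))) ->
  (forall (j : 'I_k) (x : 'I_(n j) -> R), normInf (apply_op (c j) x) <= norm2 x) ->
  (forall (j : 'I_k) (x : 'I_(n j) -> R),
      norm2 x <= (m%:R / (m%:R - 1)) * normInf (apply_op (c j) x)) ->
  proj_norm rho <= lp_value c rho <= (m%:R / (m%:R - 1)) ^+ k * proj_norm rho.
Proof.
move=> hk hm Hinj H2 H3.
set M := m%:R / (m%:R - 1) : R.
have M0 : 0 < M.
  have h1 : (1 : R) < m%:R by rewrite ltr1n.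
  rewrite /M divr_gt0 //; [exact: lt_trans h1 | by rewrite subr_gt0].
have Mk : 0 < M ^+ k by exact: exprn_gt0.
have UB : forall lam, lp_feasible c lam ->
    \sum_idx rho idx * lam idx <= M ^+ k * proj_norm rho.
  move=> lam hf.
  suff : (\sum_idx rho idx * lam idx) / M ^+ k <= proj_norm rho.
    by rewrite ler_pdivrMr // mulrC.
  rewrite proj_normE; apply: lb_le_inf (T_ne _ _ _ hk rho) _ => t [r [u [h ->]]].
  rewrite ler_pdivrMr // mulrC.
  exact: (@rep_bound R k n N c lam M (ltW M0) hf H3 _ _ rho h).
pose LP := [set v : R | exists lam : multi_index n -> R,
         lp_feasible c lam /\ v = \sum_(idx : multi_index n) rho idx * lam idx]%classic.
have LPne : (LP !=set0)%classic.
  exists 0, (fun=> 0); split.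
    by move=> s; rewrite big1 ?lerN10 ?ler01 // => idx _; rewrite mul0r.
  by rewrite big1 // => idx _; rewrite mulr0.
have LPub : has_ubound LP.
  by exists (M ^+ k * proj_norm rho) => v [lam [hf ->]]; exact: UB.
apply/andP; split; last first.
  by apply: ge_sup => // v [lam [hf ->]]; exact: UB.
(* lower bound via Hahn-Banach *)
pose I := multi_index n.
pose p (f : {ffun I -> R^o}) : R := proj_norm (fun idx => f idx).
have pD : forall f g : {ffun I -> R^o}, p (f + g) <= p f + p g.
  move=> f g; rewrite /p (_ : (fun idx => (f + g) idx) = (fun idx => f idx + g idx)).
    exact: pi_add.
  by apply: boolp.funext => idx; rewrite ffunE.
have pZ : forall (t : R) (f : {ffun I -> R^o}), p (t *: f) <= `|t| * p f.
  move=> t f; rewrite /p (_ : (fun idx => (t *: f) idx) = (fun idx => t * f idx)).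
    exact: pi_scale.
  by apply: boolp.funext => idx; rewrite ffunE.
have p0 : forall f : {ffun I -> R^o}, 0 <= p f by move=> f; exact: pi_ge0.
pose rhoF : {ffun I -> R^o} := [ffun idx => rho idx].
pose e (i : I) : {ffun I -> R^o} := [ffun x => (x == i)%:R].
have [w hw] := @dom_seq R {ffun I -> R^o} I p rhoF e pD pZ p0 (enum I) (enum_uniq _).
have HW : forall (cc : R) (a : I -> R),
    cc * proj_norm rho + \sum_idx a idx * w idx <=
    proj_norm (fun idx => cc * rho idx + a idx).
  move=> cc a; have := hw cc a; rewrite /Fs big_enum /=.
  have -> : p rhoF = proj_norm rho.
    by rewrite /p; congr proj_norm; apply: boolp.funext => idx; rewrite ffunE.
  move/le_trans; apply; apply: eqW'; rewrite /p; congr proj_norm.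
  apply: boolp.funext => idx; rewrite /Ls !ffunE sum_ffunE big_enum /=.
  rewrite (bigD1 idx) //= !ffunE eqxx !scaleoE trueR mulr1 big1 ?addr0 // => i ne.
  by rewrite !ffunE scaleoE eq_sym (negbTE ne) falseR mulr0.
have pi0 : proj_norm (fun _ : I => (0 : R)) <= 0.
  have := pi_scale _ _ _ hk 0 rho; rewrite normr0 mul0r.
  rewrite (_ : (fun idx : I => 0 * rho idx) = (fun _ : I => (0 : R))) //.
  by apply: boolp.funext => idx; rewrite mul0r.
have Hrho : proj_norm rho <= \sum_idx rho idx * w idx.
  have := HW 1 (fun idx => - rho idx).
  rewrite (_ : (fun idx : I => 1 * rho idx + - rho idx) = (fun _ : I => (0 : R))); last first.
    by apply: boolp.funext => idx; rewrite mul1r addrN.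
  move=> h; have := le_trans h pi0.
  under eq_bigr do rewrite mulNr.
  rewrite sumrN mul1r subr_le0 => h'.
  by apply: le_trans h' _; apply: eqW'; apply: eq_bigr => idx _; rewrite mulrC.
have Hfeas : lp_feasible c w.
  move=> s; pose g := fun idx : I => \prod_(j < k) c j (idx j) (s j).
  have gle : proj_norm g <= 1.
    apply: le_trans (pi_rank1 _ _ _ (fun j i => c j i (s j))) _.
    apply: le_trans (@ler_prod _ _ _ xpredT _ (fun=> 1) _) _.
      move=> j _; apply/andP; split; first exact: norm2_ge0.
      exact: row_le1 (H2 j).
    by rewrite big1.
  have h1 := HW 0 g.
  rewrite (_ : (fun idx : I => 0 * rho idx + g idx) = g) in h1; last first.
    by apply: boolp.funext => idx; rewrite mul0r add0r.
  have h2 := HW 0 (fun idx => - g idx).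
  rewrite (_ : (fun idx : I => 0 * rho idx + - g idx) = (fun idx => -1 * g idx)) in h2; last first.
    by apply: boolp.funext => idx; rewrite mul0r add0r mulN1r.
  have h3 := pi_scale _ _ _ hk (-1) g; rewrite normrN normr1 mul1r in h3.
  have E : \sum_idx w idx * \prod_(j < k) c j (idx j) (s j) = \sum_idx g idx * w idx.
    by apply: eq_bigr => idx _; rewrite mulrC.
  have E2 : \sum_idx - g idx * w idx = - \sum_idx g idx * w idx.
    by rewrite -sumrN; apply: eq_bigr => idx _; rewrite mulNr.
  rewrite E2 !mul0r !add0r in h1 h2.
  rewrite E; apply/andP; split; lra.
apply: le_trans Hrho _; rewrite /lp_value; apply: (ub_le_sup LPub); exists w; split => //.
Qed.
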